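(* Let $X$ be a complex Banach space and let $\{S_h\},\{T_h\}\subset L(X)$, $h\in(0,1]$, be two bounded families. (i) If $\{S_h\},\{T_h\}$ are asymptotically equivalent, then they are asymptotically quasinilpotent equivalent. (ii) If $\lim_{h\to0}\|S_hT_h-T_hS_h\|=0$ and $\lim_{n\to\infty}\big(\limsup_{h\to0}\|(S_h-T_h)^{[n]}\|\big)^{1/n}=0$, then $\lim_{n\to\infty}\big(\limsup_{h\to0}\|(T_h-S_h)^{[n]}\|\big)^{1/n}=0$, so $\{S_h\},\{T_h\}$ are asymptotically quasinilpotent equivalent. (iii) If $\{A_h\}\subset L(X)$ is a bounded family, $\{S_h\},\{T_h\}$ are asymptotically quasinilpotent equivalent and $\lim_{h\to0}\|S_hA_h-A_hS_h\|=0$, it does not necessarily follow that $\lim_{h\to0}\|T_hA_h-A_hT_h\|=0$ (i.e. there exist bounded families for which the hypotheses hold and this conclusion fails).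
   Context: $L(X)$ is the algebra of bounded linear operators on $X$. A family $\{S_h\}_{h\in(0,1]}$ is bounded if $\sup_h\|S_h\|<\infty$. For $T,S\in L(X)$, $(T-S)^{[n]}=\sum_{k=0}^{n}(-1)^{n-k}\binom{n}{k}T^kS^{n-k}$. Families are asymptotically equivalent if $\lim_{h\to0}\|S_h-T_h\|=0$, and asymptotically quasinilpotent equivalent if $\lim_{n\to\infty}\big(\limsup_{h\to0}\|(S_h-T_h)^{[n]}\|\big)^{1/n}=\lim_{n\to\infty}\big(\limsup_{h\to0}\|(T_h-S_h)^{[n]}\|\big)^{1/n}=0$. *)

(* Defs.v *)
(* Bounded linear operators are maps X -> X satisfying Coquelicot's
   [is_linear] (additive, C-homogeneous, bounded). *)
From Stdlib Require Import Reals.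
From Coquelicot Require Import Coquelicot.
Open Scope R_scope.

Section Defs.
Context {X : CompleteNormedModule C_AbsRing}.

Definition opnorm (L : X -> X) : R :=
  real (Lub_Rbar (fun r => exists x : X, norm x <= 1 /\ r = norm (L x))).

(* (T - S)^[n] = sum_{k=0}^n (-1)^(n-k) binom(n,k) T^k S^(n-k) *)
Definition binom_diff (T S : X -> X) (n : nat) : X -> X :=
  fun x => sum_n (fun k =>
     scal (RtoC ((-1) ^ (n - k) * Binomial.C n k))
          (Nat.iter k T (Nat.iter (n - k) S x))) n.

Definition commutator (S T : X -> X) : X -> X :=
  fun x => minus (S (T x)) (T (S x)).

Definition bounded_family (F : R -> X -> X) : Prop :=
  (forall h, 0 < h <= 1 -> is_linear (F h)) /\
  exists M, forall h, 0 < h <= 1 -> opnorm (F h) <= M.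

Definition asym_equiv (S T : R -> X -> X) : Prop :=
  filterlim (fun h => opnorm (fun x => minus (S h x) (T h x)))
            (at_right 0) (locally 0).

Definition comm_vanish (S T : R -> X -> X) : Prop :=
  filterlim (fun h => opnorm (commutator (S h) (T h)))
            (at_right 0) (locally 0).

End Defs.

Definition limsup0 (f : R -> R) : Rbar :=
  Rbar_glb (fun y => exists d, 0 < d /\
     y = Lub_Rbar (fun r => exists h, 0 < h < d /\ h <= 1 /\ r = f h)).

Definition rbar_root (n : nat) (y : Rbar) : Rbar :=
  match y with
  | Finite r => if Rle_dec r 0 then Finite 0 else Finite (Rpower r (/ INR n))
  | p_infty => p_infty
  | m_infty => Finite 0
  end.

Definition rbar_seq_to0 (u : nat -> Rbar) : Prop :=
  forall eps : posreal, exists N : nat, forall n, (N <= n)%nat ->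
    Rbar_lt (Rbar_abs (u n)) eps.

Definition qn_to0 {X : CompleteNormedModule C_AbsRing}
  (S T : R -> X -> X) : Prop :=
  rbar_seq_to0 (fun n =>
    rbar_root n (limsup0 (fun h => opnorm (binom_diff (S h) (T h) n)))).

Definition asym_qn_equiv {X : CompleteNormedModule C_AbsRing}
  (S T : R -> X -> X) : Prop := qn_to0 S T /\ qn_to0 T S.

(* Main.v *)
Require Import Defs.
From Stdlib Require Import Reals Lra Lia Classical.
From Coquelicot Require Import Coquelicot.
Open Scope R_scope.

Section AG.
Context {G : AbelianGroup}.

Lemma pp (x y z : G) : plus x (plus y z) = plus y (plus x z).
Proof. rewrite !plus_assoc, (plus_comm x y). reflexivity. Qed.
Lemma mdef (x y : G) : minus x y = plus x (opp y). Proof. reflexivity. Qed.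
Lemma canc (x y : G) : plus x (plus (opp x) y) = y.
Proof. rewrite plus_assoc, (plus_opp_r x). apply plus_zero_l. Qed.
Lemma canc' (x y : G) : plus (opp x) (plus x y) = y.
Proof. rewrite plus_assoc, (plus_opp_l x). apply plus_zero_l. Qed.
End AG.

Ltac norm_ag := rewrite ?mdef; rewrite ?opp_plus, ?opp_opp; rewrite <- ?plus_assoc.
Ltac front x := repeat (rewrite (pp _ x) || rewrite (plus_comm _ x)).
Ltac cancel x := front (opp x); front x; first [rewrite (canc x) | rewrite (canc' x)].
Ltac fe x := try (front x; f_equal).

Section AG2.
Context {G : AbelianGroup}.
Lemma agI1 (a b c d e f : G) :
  minus (minus a b) (minus c d) =
  plus (plus (minus (minus a e) (minus b f)) (minus e c)) (minus d f).
Proof. norm_ag. cancel e. cancel f. fe a; fe (opp b); fe (opp c); try reflexivity. Qed.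
Lemma agI2 (a b c d e : G) :
  minus (minus a b) (minus c d) =
  plus (minus (minus a c) (minus e d)) (minus e b).
Proof. norm_ag. cancel e. fe a; fe (opp b); fe (opp c); try reflexivity. Qed.
Lemma agI3 (a b c d e : G) :
  minus (minus a b) (minus c d) =
  plus (minus (minus a e) (minus b d)) (minus e c).
Proof. norm_ag. cancel e. fe a; fe (opp b); fe (opp c); try reflexivity. Qed.
Lemma ag4 (a b c d : G) : minus (minus a b) (minus c d) = minus (minus a c) (minus b d).
Proof. norm_ag. fe a; fe (opp b); try reflexivity. Qed.
Lemma mpc (a b : G) : plus (minus a b) b = a.
Proof. rewrite mdef, <- plus_assoc, (plus_opp_l b). apply plus_zero_r. Qed.
Lemma agT (s p q r t1 t2 : G) : plus s p = minus t1 t2 ->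
  plus (plus s (minus p q)) r = minus (plus t1 r) (plus t2 q).
Proof.
  intros H. assert (Ht : t1 = plus (plus s p) t2).
  { rewrite H. symmetry. apply mpc. }
  rewrite Ht. norm_ag. cancel t2. fe s; fe p; fe (opp q); try reflexivity.
Qed.
Lemma agB (u v : G) : plus (opp u) v = minus v u.
Proof. rewrite mdef. apply plus_comm. Qed.
Lemma agpm (a b : G) : plus (minus a b) b = a.
Proof. apply mpc. Qed.
End AG2.
Section AG3.
Context {G : AbelianGroup}.
Lemma agOM (a b : G) : opp (minus a b) = minus (opp a) (opp b).
Proof. norm_ag. reflexivity. Qed.
End AG3.
Section AG4.
Context {G : AbelianGroup}.
Lemma mz0 : @minus G zero zero = zero.
Proof. apply minus_eq_zero. Qed.
Lemma mzr (x : G) : minus x zero = x.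
Proof. rewrite mdef, opp_zero. apply plus_zero_r. Qed.
Lemma mzz : @minus G zero (minus zero zero) = zero.
Proof. rewrite mz0. apply mz0. Qed.
End AG4.

Section Op.
Context {X : CompleteNormedModule C_AbsRing}.

Lemma nz : norm (@zero X) = 0. Proof. apply (@norm_zero C_AbsRing X). Qed.

Lemma nscal (l : C) (x : X) : norm (scal l x) <= Cmod l * norm x.
Proof. apply (@norm_scal C_AbsRing X). Qed.

Definition Bnd (L : X -> X) (K : R) := forall x, norm (L x) <= K * norm x.

Lemma opnorm_ub (L : X -> X) :
  (exists K, forall x : X, norm x <= 1 -> norm (L x) <= K) ->
  forall x : X, norm x <= 1 -> norm (L x) <= opnorm L.
Proof.
  intros [K HK] x Hx. unfold opnorm.
  destruct (Lub_Rbar_correct (fun r => exists x : X, norm x <= 1 /\ r = norm (L x))) as [Hub Hlub].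
  assert (H1 : Rbar_le (norm (L x)) (Lub_Rbar (fun r => exists x : X, norm x <= 1 /\ r = norm (L x)))).
  { apply Hub. exists x; auto. }
  assert (H2 : Rbar_le (Lub_Rbar (fun r => exists x : X, norm x <= 1 /\ r = norm (L x))) K).
  { apply Hlub. intros r [y [Hy ->]]. simpl. auto. }
  destruct (Lub_Rbar _) eqn:E; simpl in *; try tauto.
Qed.

Lemma opnorm_le (L : X -> X) (K : R) :
  (forall x : X, norm x <= 1 -> norm (L x) <= K) -> opnorm L <= K.
Proof.
  intros HK. unfold opnorm.
  destruct (Lub_Rbar_correct (fun r => exists x : X, norm x <= 1 /\ r = norm (L x))) as [Hub Hlub].
  assert (H1 : Rbar_le (norm (L zero)) (Lub_Rbar (fun r => exists x : X, norm x <= 1 /\ r = norm (L x)))).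
  { apply Hub. exists zero; split; auto. rewrite nz; lra. }
  assert (H2 : Rbar_le (Lub_Rbar (fun r => exists x : X, norm x <= 1 /\ r = norm (L x))) K).
  { apply Hlub. intros r [y [Hy ->]]. simpl. auto. }
  destruct (Lub_Rbar _) eqn:E; simpl in *; try tauto.
Qed.

Lemma opnorm_ge0 (L : X -> X) :
  (exists K, forall x : X, norm x <= 1 -> norm (L x) <= K) -> 0 <= opnorm L.
Proof.
  intros H. apply Rle_trans with (norm (L zero)). apply norm_ge_0.
  apply opnorm_ub; auto. rewrite nz; lra.
Qed.

Lemma bnd_ball (L : X -> X) K : Bnd L K -> 0 <= K ->
  forall x : X, norm x <= 1 -> norm (L x) <= K.
Proof.
  intros H HK x Hx. eapply Rle_trans. apply H.
  rewrite <- (Rmult_1_r K) at 2. apply Rmult_le_compat_l; auto.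
Qed.

Lemma bnd_opnorm (L : X -> X) K : Bnd L K -> 0 <= K -> opnorm L <= K.
Proof. intros. apply opnorm_le. apply bnd_ball; auto. Qed.

Lemma bnd_ex (L : X -> X) K : Bnd L K -> 0 <= K ->
  exists K, forall x : X, norm x <= 1 -> norm (L x) <= K.
Proof. intros. exists K. apply bnd_ball; auto. Qed.

Lemma linear_bnd (L : X -> X) : is_linear L -> Bnd L (opnorm L).
Proof.
  intros HL x.
  destruct (linear_norm L HL) as [M [HM HMb]].
  assert (Hex : exists K, forall x : X, norm x <= 1 -> norm (L x) <= K).
  { exists M. intros y Hy. eapply Rle_trans. apply HMb.
    rewrite <- (Rmult_1_r M) at 2. apply Rmult_le_compat_l; lra. }
  destruct (Req_dec (norm x) 0) as [H0|H0].
  - rewrite H0, Rmult_0_r. specialize (HMb x). rewrite H0, Rmult_0_r in HMb. exact HMb.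
  - assert (Hr : 0 < norm x) by (pose proof (norm_ge_0 x); lra).
    set (r := norm x) in *.
    set (y := scal (RtoC (/ r)) x).
    assert (Hy : norm y <= 1).
    { unfold y. eapply Rle_trans. apply nscal. rewrite Cmod_R.
      rewrite Rabs_pos_eq. fold r. right. field. lra. left. apply Rinv_0_lt_compat. lra. }
    assert (Hxy : x = scal (RtoC r) y).
    { unfold y. rewrite scal_assoc.
      replace (mult (RtoC r) (RtoC (/ r))) with (@one C_Ring). rewrite scal_one. reflexivity.
      change (mult (RtoC r) (RtoC (/ r))) with (Cmult (RtoC r) (RtoC (/ r))).
      rewrite <- RtoC_mult. rewrite Rinv_r by lra. reflexivity. }
    rewrite Hxy, (linear_scal L HL).
    eapply Rle_trans. apply nscal. rewrite Cmod_R, Rabs_pos_eq by lra.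
    rewrite Rmult_comm. apply Rmult_le_compat_r. lra. apply opnorm_ub; auto.
Qed.

End Op.

Definition SE (f : R -> R) d := fun r => exists h, 0 < h < d /\ h <= 1 /\ r = f h.

Lemma supd_fin (f : R -> R) (B d : R) : 0 < d ->
  (forall h, 0 < h <= 1 -> 0 <= f h <= B) ->
  exists s, Lub_Rbar (SE f d) = Finite s /\ 0 <= s <= B /\
    (forall h, 0 < h < d -> h <= 1 -> f h <= s) /\
    (forall K, (forall h, 0 < h < d -> h <= 1 -> f h <= K) -> s <= K).
Proof.
  intros Hd Hf.
  destruct (Lub_Rbar_correct (SE f d)) as [Hub Hlub].
  set (h0 := Rmin (d/2) 1).
  assert (Hh0 : 0 < h0 < d /\ h0 <= 1).
  { unfold h0. split; [split|]. apply Rmin_glb_lt; lra.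
    eapply Rle_lt_trans. apply Rmin_l. lra. apply Rmin_r. }
  assert (H1 : Rbar_le (f h0) (Lub_Rbar (SE f d))).
  { apply Hub. exists h0. tauto. }
  assert (H2 : Rbar_le (Lub_Rbar (SE f d)) B).
  { apply Hlub. intros r [h [Hh [Hh1 ->]]]. simpl. apply Hf; lra. }
  destruct (Lub_Rbar (SE f d)) as [s| |] eqn:E; simpl in *; try tauto.
  exists s. split; auto. split. split; auto.
  apply Rle_trans with (f h0); auto. apply Hf; lra.
  split.
  - intros h Hh Hh1. assert (Hx := Hub (f h) (ex_intro _ h (conj Hh (conj Hh1 eq_refl)))).
    exact Hx.
  - intros K HK. assert (Hu : is_ub_Rbar (SE f d) (Finite K)).
    { intros r [h [Hh [Hh1 ->]]]. simpl. auto. }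
    exact (Hlub _ Hu).
Qed.

Lemma ls_fin (f : R -> R) (B : R) :
  (forall h, 0 < h <= 1 -> 0 <= f h <= B) ->
  exists r, limsup0 f = Finite r /\ 0 <= r <= B /\
    (forall eps, 0 < eps -> exists d, 0 < d /\ forall h, 0 < h < d -> h <= 1 -> f h <= r + eps) /\
    (forall d, 0 < d -> (forall K, (forall h, 0 < h < d -> h <= 1 -> f h <= K) -> r <= K)).
Proof.
  intros Hf. unfold limsup0.
  set (E := fun y : Rbar => exists d : R, 0 < d /\ y = Lub_Rbar (fun r => exists h : R, 0 < h < d /\ h <= 1 /\ r = f h)).
  destruct (proj2_sig (Rbar_ex_glb E)) as [Hlb Hglb].
  change (proj1_sig (Rbar_ex_glb E)) with (Rbar_glb E) in Hlb, Hglb.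
  assert (Hlow : forall d, 0 < d -> forall s, Lub_Rbar (SE f d) = Finite s -> Rbar_le (Rbar_glb E) s).
  { intros d Hd s Hs. apply Hlb. exists d. split. exact Hd. symmetry. exact Hs. }
  assert (H0 : Rbar_le 0 (Rbar_glb E)).
  { apply Hglb. intros y [d [Hd ->]]. destruct (supd_fin f B d Hd Hf) as [s [Hs [Hs0 _]]].
    change (Lub_Rbar (fun r => exists h, 0 < h < d /\ h <= 1 /\ r = f h)) with (Lub_Rbar (SE f d)).
    rewrite Hs. simpl. lra. }
  destruct (supd_fin f B 1 Rlt_0_1 Hf) as [s1 [Hs1 [Hs1b _]]].
  assert (HB := Hlow 1 Rlt_0_1 s1 Hs1).
  destruct (Rbar_glb E) as [r| |] eqn:Er; simpl in *; try tauto.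
  exists r. split; auto. split. lra. split.
  - intros eps Heps. apply NNPP. intro Hn.
    assert (Hlb2 : Rbar_le (r + eps) r).
    { apply Hglb. intros y [d [Hd ->]].
      destruct (supd_fin f B d Hd Hf) as [s [Hs [_ [Hs3 _]]]].
      change (Lub_Rbar (fun r => exists h, 0 < h < d /\ h <= 1 /\ r = f h)) with (Lub_Rbar (SE f d)).
      rewrite Hs. simpl. apply Rnot_lt_le. intro Hlt. apply Hn. exists d. split; auto.
      intros h Hh Hh1. specialize (Hs3 h Hh Hh1). lra. }
    simpl in Hlb2. lra.
  - intros d Hd K HK. destruct (supd_fin f B d Hd Hf) as [s [Hs [_ [_ Hs4]]]].
    specialize (Hlow d Hd s Hs).
    specialize (Hs4 K HK). lra.
Qed.

Lemma ls_le (f g : R -> R) (B1 B2 : R) rf rg :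
  (forall h, 0 < h <= 1 -> 0 <= f h <= B1) ->
  (forall h, 0 < h <= 1 -> 0 <= g h <= B2) ->
  (forall eps, 0 < eps -> exists d, 0 < d /\ forall h, 0 < h < d -> h <= 1 -> f h <= g h + eps) ->
  limsup0 f = Finite rf -> limsup0 g = Finite rg -> rf <= rg.
Proof.
  intros Hf Hg Hfg Ef Eg.
  destruct (ls_fin f B1 Hf) as [rf' [Ef' [_ [_ Hf4]]]].
  destruct (ls_fin g B2 Hg) as [rg' [Eg' [_ [Hg3 _]]]].
  rewrite Ef in Ef'. rewrite Eg in Eg'. injection Ef' as ->. injection Eg' as ->.
  apply Rnot_lt_le. intro Hlt. set (eps := (rf' - rg') / 3).
  assert (He : 0 < eps) by (unfold eps; lra).
  destruct (Hg3 eps He) as [d1 [Hd1 Hd1']].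
  destruct (Hfg eps He) as [d2 [Hd2 Hd2']].
  assert (Hd : 0 < Rmin d1 d2) by (apply Rmin_glb_lt; lra).
  assert (Hk := Hf4 (Rmin d1 d2) Hd (rg' + 2 * eps)).
  assert (rf' <= rg' + 2 * eps).
  { apply Hk. intros h Hh Hh1.
    assert (h < d1) by (eapply Rlt_le_trans; [apply Hh| apply Rmin_l]).
    assert (h < d2) by (eapply Rlt_le_trans; [apply Hh| apply Rmin_r]).
    specialize (Hd1' h (conj (proj1 Hh) H) Hh1). specialize (Hd2' h (conj (proj1 Hh) H0) Hh1). lra. }
  unfold eps in H. lra.
Qed.

Lemma ls_fin' (f : R -> R) (B : R) :
  (forall h, 0 < h <= 1 -> 0 <= f h <= B) ->
  exists r, limsup0 f = Finite r /\ 0 <= r <= B.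
Proof. intros H. destruct (ls_fin f B H) as [r [? [? _]]]. eauto. Qed.

Lemma RtoC_opp' (x : R) : RtoC (- x) = @opp C_AbelianGroup (RtoC x).
Proof. unfold RtoC. change (@opp C_AbelianGroup (x, 0)) with (Copp (x, 0)). unfold Copp. simpl. f_equal; ring. Qed.
Lemma RtoC_minus' (x y : R) : RtoC (x - y) = @minus C_AbelianGroup (RtoC x) (RtoC y).
Proof. unfold RtoC. change (@minus C_AbelianGroup (x, 0) (y, 0)) with (Cminus (x, 0) (y,0)). unfold Cminus, Cplus, Copp. simpl. f_equal; ring. Qed.

Section Eops.
Context {X : CompleteNormedModule C_AbsRing}.
Let GX := CompleteNormedModule.AbelianGroup C_AbsRing X.

Fixpoint Eop (P Q : X -> X) (n : nat) (A : X -> X) : X -> X :=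
  match n with O => A | S m => fun x => minus (P (Eop P Q m A x)) (Eop P Q m A (Q x)) end.

Lemma E_shift P Q n : forall A x, Eop P Q (S n) A x = Eop P Q n (fun y => minus (P (A y)) (A (Q y))) x.
Proof. induction n; intros A x. reflexivity. simpl. rewrite <- !IHn. reflexivity. Qed.

Lemma nminus (u v : X) : norm (minus u v) <= norm u + norm v.
Proof. eapply Rle_trans. apply (@norm_triangle C_AbsRing X). rewrite (@norm_opp C_AbsRing X). lra. Qed.

Lemma E_bnd P Q M n : forall A a, 0 <= a -> 0 <= M -> Bnd P M -> Bnd Q M -> Bnd A a ->
  Bnd (Eop P Q n A) ((2*M)^n * a).
Proof.
  induction n; intros A a Ha HM HP HQ HA x; simpl.
  - rewrite Rmult_1_l. apply HA.
  - eapply Rle_trans. apply nminus.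
    assert (H1 := IHn A a Ha HM HP HQ HA x).
    assert (H2 := IHn A a Ha HM HP HQ HA (Q x)).
    assert (H3 := HP (Eop P Q n A x)). assert (H4 := HQ x).
    assert (H5 : norm (P (Eop P Q n A x)) <= M * ((2 * M) ^ n * a * norm x)).
    { eapply Rle_trans. apply H3. apply Rmult_le_compat_l; auto. }
    assert (H6 : norm (Eop P Q n A (Q x)) <= (2 * M) ^ n * a * (M * norm x)).
    { eapply Rle_trans. apply H2. apply Rmult_le_compat_l; auto.
      apply Rmult_le_pos; auto. apply pow_le. lra. }
    replace (2 * M * (2 * M) ^ n * a * norm x) with (M * ((2*M)^n*a*norm x) + (2*M)^n*a*(M*norm x)) by ring. lra.
Qed.

Lemma lin_sum (P : X -> X) (f : nat -> X) n : is_linear P ->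
  P (sum_n f n) = sum_n (fun k => P (f k)) n.
Proof.
  intros HP. induction n. rewrite !sum_O. reflexivity.
  rewrite !sum_Sn, (linear_plus P HP), IHn. reflexivity.
Qed.

Lemma scal_minus_l (a b : C) (u : X) : scal (@minus C_AbelianGroup a b) u = minus (scal a u) (scal b u).
Proof. exact (eq_trans (@scal_distr_r C_Ring (CompleteNormedModule.ModuleSpace C_AbsRing X) a (opp b) u) (f_equal (plus (scal a u)) (@scal_opp_l C_Ring (CompleteNormedModule.ModuleSpace C_AbsRing X) b u))). Qed.

Lemma scal_oppC (b : C) (u : X) : scal (@opp C_AbelianGroup b) u = opp (scal b u).
Proof. exact (@scal_opp_l C_Ring (CompleteNormedModule.ModuleSpace C_AbsRing X) b u). Qed.

Lemma tele (al be : nat -> C) (A : nat -> X) n :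
  al 0%nat = @opp C_AbelianGroup (be 0%nat) ->
  (forall k, (k < n)%nat -> al (S k) = @minus C_AbelianGroup (be k) (be (S k))) ->
  al (S n) = be n ->
  sum_n (fun k => scal (al k) (A k)) (S n) =
  minus (sum_n (fun k => scal (be k) (A (S k))) n) (sum_n (fun k => scal (be k) (A k)) n).
Proof.
  intros H0 Hk Hn.
  assert (Cl : forall m, (m <= n)%nat ->
    plus (sum_n (fun k => scal (al k) (A k)) m) (scal (be m) (A (S m))) =
    minus (sum_n (fun k => scal (be k) (A (S k))) m) (sum_n (fun k => scal (be k) (A k)) m)).
  { induction m; intros Hm.
    - rewrite !sum_O, H0, scal_oppC. apply (@agB GX).
    - rewrite !sum_Sn. rewrite (Hk m) by lia. rewrite scal_minus_l.
      apply (@agT GX). apply IHm. lia. }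
  rewrite sum_Sn, Hn. apply Cl. lia.
Qed.

Lemma binom_E (P Q : X -> X) n : is_linear P -> forall x,
  binom_diff P Q n x = Eop P Q n (fun y => y) x.
Proof.
  intros HP. induction n; intros x.
  - unfold binom_diff. rewrite sum_O. simpl. rewrite C_n_0, Rmult_1_l.
    apply (@scal_one C_Ring (CompleteNormedModule.ModuleSpace C_AbsRing X)).
  - simpl Eop. rewrite <- !IHn. unfold binom_diff. rewrite (lin_sum P) by auto.
    set (A := fun k => Nat.iter k P (Nat.iter (S n - k) Q x)).
    set (al := fun k => RtoC ((-1) ^ (S n - k) * Binomial.C (S n) k)).
    set (be := fun k => RtoC ((-1) ^ (n - k) * Binomial.C n k)).
    transitivity (minus (sum_n (fun k => scal (be k) (A (S k))) n) (sum_n (fun k => scal (be k) (A k)) n)).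
    + change (sum_n (fun k => scal (al k) (A k)) (S n) = minus (sum_n (fun k => scal (be k) (A (S k))) n) (sum_n (fun k => scal (be k) (A k)) n)).
      apply tele.
      * unfold al, be. rewrite <- RtoC_opp'. f_equal. rewrite !Nat.sub_0_r, !C_n_0. simpl. ring.
      * intros k Hk. unfold al, be. rewrite <- RtoC_minus'. f_equal.
        replace (S n - S k)%nat with (n - k)%nat by lia.
        rewrite <- pascal by auto. replace (n - k)%nat with (S (n - S k)) by lia. simpl. ring.
      * unfold al, be. f_equal. rewrite !Nat.sub_diag, !C_n_n. ring.
    + f_equal.
      * apply sum_n_ext. intros k. rewrite (linear_scal P HP). reflexivity.
      * apply sum_n_ext_loc. intros k Hk. unfold A. f_equal.
        rewrite Nat.sub_succ_l by lia. rewrite Nat.iter_succ_r. reflexivity.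
Qed.

End Eops.

Lemma flim_eps (e : R -> R) : filterlim e (at_right 0) (locally 0) ->
  forall eps, 0 < eps -> exists d, 0 < d /\ forall h, 0 < h < d -> Rabs (e h) < eps.
Proof.
  intros H eps Heps. apply filterlim_locally with (eps := mkposreal eps Heps) in H.
  destruct H as [d Hd]. exists d. split. apply cond_pos.
  intros h [Hh1 Hh2]. specialize (Hd h). 
  assert (Hb : ball 0 d h).
  { change (Rabs (h - 0) < d). rewrite Rminus_0_r, Rabs_pos_eq; lra. }
  specialize (Hd Hb Hh1). change (Rabs (e h - 0) < eps) in Hd. rewrite Rminus_0_r in Hd. exact Hd.
Qed.

Section P1.
Context {X : CompleteNormedModule C_AbsRing}.

Lemma bnd_mono (L : X -> X) K K' : Bnd L K -> K <= K' -> Bnd L K'.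
Proof. intros H HK x. eapply Rle_trans. apply H. apply Rmult_le_compat_r. apply norm_ge_0. auto. Qed.

Lemma bf_bnd (F : R -> X -> X) : bounded_family F ->
  exists M, 0 <= M /\ forall h, 0 < h <= 1 -> is_linear (F h) /\ Bnd (F h) M.
Proof.
  intros [Hl [M HM]]. exists (Rmax M 0). split. apply Rmax_r.
  intros h Hh. split. auto. apply bnd_mono with (K := opnorm (F h)).
  apply linear_bnd; auto. eapply Rle_trans. apply HM; auto. apply Rmax_l.
Qed.

Lemma bf_bnd2 (F G : R -> X -> X) : bounded_family F -> bounded_family G ->
  exists M, 0 <= M /\ forall h, 0 < h <= 1 -> is_linear (F h) /\ Bnd (F h) M /\ is_linear (G h) /\ Bnd (G h) M.
Proof.
  intros HF HG. destruct (bf_bnd F HF) as [M1 [HM1 H1]]. destruct (bf_bnd G HG) as [M2 [HM2 H2]].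
  exists (Rmax M1 M2). split. eapply Rle_trans. apply HM1. apply Rmax_l.
  intros h Hh. destruct (H1 h Hh). destruct (H2 h Hh). split; [auto|split; [|split; [auto|]]].
  apply bnd_mono with (K := M1); auto. apply Rmax_l. apply bnd_mono with (K := M2); auto. apply Rmax_r.
Qed.

Lemma bnd_binom (P Q : X -> X) M n : 0 <= M -> is_linear P -> Bnd P M -> Bnd Q M ->
  Bnd (binom_diff P Q n) ((2*M)^n).
Proof.
  intros HM HP HPM HQM x. rewrite (binom_E P Q n HP x).
  assert (H := E_bnd P Q M n (fun y => y) 1 Rle_0_1 HM HPM HQM).
  rewrite Rmult_1_r in H. apply H. intros y. lra.
Qed.

Lemma opnorm_bnd_le (L : X -> X) K : Bnd L K -> 0 <= K -> 0 <= opnorm L <= K.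
Proof. intros. split. apply opnorm_ge0. eapply bnd_ex; eauto. apply bnd_opnorm; auto. Qed.

Lemma root_zero n : (0 < n)%nat -> rbar_root n (Finite 0) = Finite 0.
Proof. intros. simpl. destruct (Rle_dec 0 0); auto. lra. Qed.

Lemma qn_equiv (P Q : R -> X -> X) (e : R -> R) :
  bounded_family P -> bounded_family Q ->
  (forall h, 0 < h <= 1 -> Bnd (fun x => minus (P h x) (Q h x)) (e h) /\ 0 <= e h) ->
  filterlim e (at_right 0) (locally 0) -> qn_to0 P Q.
Proof.
  intros HP HQ He Hlim.
  destruct (bf_bnd2 P Q HP HQ) as [M [HM HPQ]].
  intros eps. exists 1%nat. intros n Hn. destruct n as [|m]. lia.
  set (f := fun h => opnorm (binom_diff (P h) (Q h) (S m))).
  assert (Hf : forall h, 0 < h <= 1 -> 0 <= f h <= (2*M)^(S m)).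
  { intros h Hh. destruct (HPQ h Hh) as [H1 [H2 [H3 H4]]]. apply opnorm_bnd_le.
    apply bnd_binom; auto. apply pow_le; lra. }
  assert (Hg : forall h, 0 < h <= 1 -> 0 <= (fun _ : R => 0) h <= 0) by (intros; lra).
  destruct (ls_fin' f _ Hf) as [rf [Ef Hrf]].
  destruct (ls_fin' _ _ Hg) as [rg [Eg Hrg]].
  assert (Hle : rf <= rg).
  { apply (ls_le f (fun _ => 0) _ _ rf rg Hf Hg); auto.
    intros ep Hep. set (K := (2*M)^m + 1).
    assert (HK : 0 < K) by (unfold K; assert (0 <= (2*M)^m) by (apply pow_le; lra); lra).
    destruct (flim_eps e Hlim (ep / K)) as [d [Hd Hd']]. apply Rdiv_lt_0_compat; lra.
    exists d. split; auto. intros h Hh Hh1.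
    destruct (HPQ h (conj (proj1 Hh) Hh1)) as [H1 [H2 [H3 H4]]].
    destruct (He h (conj (proj1 Hh) Hh1)) as [He1 He2].
    specialize (Hd' h Hh). rewrite Rabs_pos_eq in Hd' by auto.
    assert (Hb : Bnd (binom_diff (P h) (Q h) (S m)) ((2*M)^m * e h)).
    { intros x. rewrite (binom_E _ _ _ H1 x), E_shift. apply E_bnd; auto. }
    assert (0 <= (2*M)^m) by (apply pow_le; lra).
    assert (f h <= (2*M)^m * e h).
    { apply bnd_opnorm; auto. apply Rmult_le_pos; auto. }
    assert ((2*M)^m * e h <= K * e h) by (apply Rmult_le_compat_r; unfold K; lra).
    assert (K * e h < ep).
    { apply Rmult_lt_reg_l with (/K). apply Rinv_0_lt_compat; auto.
      rewrite <- Rmult_assoc, Rinv_l, Rmult_1_l by lra. unfold Rdiv in Hd'. lra. }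
    lra. }
  change (Rbar_lt (Rbar_abs (rbar_root (S m) (limsup0 f))) eps).
  rewrite Ef. assert (rf = 0) by lra. subst rf. rewrite root_zero by lia. simpl.
  rewrite Rabs_R0. apply cond_pos.
Qed.

End P1.

Section P1b.
Context {X : CompleteNormedModule C_AbsRing}.

Lemma lin_minus (A B : X -> X) : is_linear A -> is_linear B -> is_linear (fun x => minus (A x) (B x)).
Proof.
  intros HA HB.
  assert (H1 : is_linear (fun x : X => opp (B x))) by (apply is_linear_comp; auto; exact (@is_linear_opp C_AbsRing (CompleteNormedModule.NormedModule C_AbsRing X))).
  assert (H2 : is_linear (fun x : X => (A x, opp (B x)))) by (apply is_linear_prod; auto).
  assert (H3 := is_linear_comp _ _ H2 (@is_linear_plus C_AbsRing (CompleteNormedModule.NormedModule C_AbsRing X))).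
  eapply is_linear_ext; [|exact H3]. intros x. reflexivity.
Qed.

Lemma lin_comm (A B : X -> X) : is_linear A -> is_linear B -> is_linear (commutator A B).
Proof.
  intros HA HB. unfold commutator. apply lin_minus; apply is_linear_comp; auto.
Qed.

Lemma norm_minus_sym (a b : X) : norm (minus a b) = norm (minus b a).
Proof. rewrite <- (opp_minus b a). apply (@norm_opp C_AbsRing X). Qed.

Theorem part1 (S T : R -> X -> X) : bounded_family S -> bounded_family T ->
  asym_equiv S T -> asym_qn_equiv S T.
Proof.
  intros HS HT He.
  set (e := fun h => opnorm (fun x => minus (S h x) (T h x))).
  assert (Hb : forall h, 0 < h <= 1 -> Bnd (fun x => minus (S h x) (T h x)) (e h) /\ 0 <= e h).
  { intros h Hh. destruct HS as [HS1 _]. destruct HT as [HT1 _].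
    assert (HL := lin_minus _ _ (HS1 h Hh) (HT1 h Hh)).
    split. apply linear_bnd; auto. apply opnorm_ge0.
    apply bnd_ex with (opnorm (fun x => minus (S h x) (T h x))). apply linear_bnd; auto.
    apply opnorm_ge0. destruct (linear_norm _ HL) as [M [HM HM']]. exists M.
    intros x Hx. eapply Rle_trans. apply HM'. rewrite <- (Rmult_1_r M) at 2. apply Rmult_le_compat_l; lra. }
  split.
  - apply (qn_equiv S T e); auto.
  - apply (qn_equiv T S e); auto.
    intros h Hh. destruct (Hb h Hh) as [H1 H2]. split; auto. intros x. rewrite norm_minus_sym. apply H1.
Qed.

End P1b.

Section P2.
Context {X : CompleteNormedModule C_AbsRing}.
Let GX := CompleteNormedModule.AbelianGroup C_AbsRing X.

Fixpoint Fop (P Q : X -> X) (n : nat) : X -> X :=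
  match n with O => fun x => x | S m => fun x => minus (Fop P Q m (P x)) (Q (Fop P Q m x)) end.

Definition Dl P Q n x := minus (Eop P Q n (fun y => y) x) (Fop P Q n x).
Definition GP P Q n x := minus (P (Fop P Q n x)) (Fop P Q n (P x)).
Definition GQ P Q n x := minus (Q (Fop P Q n x)) (Fop P Q n (Q x)).

Variables P Q : X -> X.
Hypothesis HP : is_linear P.
Hypothesis HQ : is_linear Q.

Lemma F_minus n : forall a b, Fop P Q n (minus a b) = minus (Fop P Q n a) (Fop P Q n b).
Proof.
  induction n; intros a b. reflexivity. simpl.
  rewrite (linear_minus P _ _ HP), IHn, IHn, (linear_minus Q _ _ HQ). apply (@ag4 GX).
Qed.

Lemma sig_opp n (y : X) : Nat.iter n opp (opp y) = opp (Nat.iter n opp y).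
Proof. rewrite <- Nat.iter_succ_r. reflexivity. Qed.

Lemma sig_Q n (y : X) : Q (Nat.iter n opp y) = Nat.iter n opp (Q y).
Proof. induction n. reflexivity. simpl. rewrite (linear_opp Q _ HQ). f_equal. exact IHn. Qed.

Lemma opp_minus2 (a b : X) : opp (minus a b) = minus (opp a) (opp b).
Proof. apply (@agOM GX). Qed.

Lemma sig_minus n (a b : X) : minus (Nat.iter n opp a) (Nat.iter n opp b) = Nat.iter n opp (minus a b).
Proof. induction n. reflexivity. simpl. transitivity (opp (minus (Nat.iter n opp a) (Nat.iter n opp b))).
  symmetry. apply opp_minus2. f_equal. exact IHn. Qed.

Lemma sig_norm n (y : X) : norm (Nat.iter n opp y) = norm y.
Proof. induction n. reflexivity. simpl. rewrite (@norm_opp C_AbsRing X). exact IHn. Qed.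

Lemma F_sigma n : forall x, Fop P Q n x = Nat.iter n opp (Eop Q P n (fun y => y) x).
Proof.
  induction n; intros x. reflexivity.
  simpl Fop. rewrite !IHn, sig_Q, sig_minus. simpl Eop. simpl Nat.iter at 2.
  rewrite <- sig_opp. f_equal. symmetry. apply opp_minus.
Qed.

Lemma I1 n x : Dl P Q (S n) x = plus (plus (minus (P (Dl P Q n x)) (Dl P Q n (Q x))) (GP P Q n x)) (GQ P Q n x).
Proof. unfold Dl, GP, GQ. simpl. rewrite (linear_minus P _ _ HP). apply (@agI1 GX). Qed.

Lemma I2 n x : GP P Q (S n) x = plus (minus (GP P Q n (P x)) (Q (GP P Q n x))) (commutator Q P (Fop P Q n x)).
Proof. unfold GP, commutator. simpl. rewrite (linear_minus P _ _ HP), (linear_minus Q _ _ HQ). apply (@agI2 GX). Qed.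

Lemma I3 n x : GQ P Q (S n) x = plus (minus (GQ P Q n (P x)) (Q (GQ P Q n x))) (Fop P Q n (commutator Q P x)).
Proof. unfold GQ, commutator. simpl. rewrite (linear_minus Q _ _ HQ), F_minus, (linear_minus Q _ _ HQ). apply (@agI3 GX). Qed.


Lemma nplus (u v : X) : norm (plus u v) <= norm u + norm v.
Proof. apply (@norm_triangle C_AbsRing X). Qed.

Lemma nmm (a : X) : norm (minus a a) = 0.
Proof. rewrite (minus_eq_zero a). apply (@norm_zero C_AbsRing X). Qed.

Lemma F_bnd M n : 0 <= M -> Bnd P M -> Bnd Q M -> Bnd (Fop P Q n) ((2*M)^n).
Proof.
  intros HM HPM HQM. induction n; intros x; simpl.
  - lra.
  - eapply Rle_trans. apply nminus.
    assert (H1 := IHn (P x)). assert (H2 := HQM (Fop P Q n x)). assert (H3 := IHn x).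
    assert (H4 := HPM x). assert (0 <= (2*M)^n) by (apply pow_le; lra).
    assert (norm (Fop P Q n (P x)) <= (2*M)^n * (M * norm x)).
    { eapply Rle_trans. apply H1. apply Rmult_le_compat_l; auto. }
    assert (norm (Q (Fop P Q n x)) <= M * ((2*M)^n * norm x)).
    { eapply Rle_trans. apply H2. apply Rmult_le_compat_l; auto. }
    replace (2 * M * (2 * M) ^ n * norm x) with ((2*M)^n * (M * norm x) + M * ((2*M)^n * norm x)) by ring.
    lra.
Qed.

Fixpoint Kf (M : R) (n : nat) : R :=
  match n with O => 0 | S m => (2*M+2) * Kf M m + (2*M)^m end.

Lemma Kf_ge0 M n : 0 <= M -> 0 <= Kf M n.
Proof. intros HM. induction n; simpl. lra. assert (0 <= (2*M)^n) by (apply pow_le; lra). nra. Qed.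

Lemma joint M c n : 0 <= M -> 0 <= c -> Bnd P M -> Bnd Q M -> Bnd (commutator Q P) c ->
  Bnd (Dl P Q n) (Kf M n * c) /\ Bnd (GP P Q n) (Kf M n * c) /\ Bnd (GQ P Q n) (Kf M n * c).
Proof.
  intros HM Hc HPM HQM HK. induction n.
  - simpl. split; [|split]; intros x; unfold Dl, GP, GQ; simpl; rewrite nmm; lra.
  - destruct IHn as [HD [HG1 HG2]].
    assert (HKf := Kf_ge0 M n HM). assert (Hp : 0 <= (2*M)^n) by (apply pow_le; lra).
    assert (Hkc : 0 <= Kf M n * c) by (apply Rmult_le_pos; auto).
    split; [|split]; intros x; assert (Hnx := norm_ge_0 x).
    + rewrite I1. eapply Rle_trans. apply nplus. eapply Rle_trans. apply Rplus_le_compat_r. apply nplus.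
      eapply Rle_trans. apply Rplus_le_compat_r. apply Rplus_le_compat_r. apply nminus.
      assert (norm (P (Dl P Q n x)) <= M * (Kf M n * c * norm x)).
      { eapply Rle_trans. apply HPM. apply Rmult_le_compat_l; auto. }
      assert (norm (Dl P Q n (Q x)) <= Kf M n * c * (M * norm x)).
      { eapply Rle_trans. apply HD. apply Rmult_le_compat_l; auto. }
      assert (H3 := HG1 x). assert (H4 := HG2 x).
      assert (0 <= (2*M)^n * c * norm x) by (apply Rmult_le_pos; auto; apply Rmult_le_pos; auto).
      simpl Kf.
      replace (((2 * M + 2) * Kf M n + (2 * M) ^ n) * c * norm x) with
        (M * (Kf M n * c * norm x) + Kf M n * c * (M * norm x) + Kf M n * c * norm x + Kf M n * c * norm x + (2*M)^n * c * norm x) by ring.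
      lra.
    + rewrite I2. eapply Rle_trans. apply nplus. eapply Rle_trans. apply Rplus_le_compat_r. apply nminus.
      assert (norm (GP P Q n (P x)) <= Kf M n * c * (M * norm x)).
      { eapply Rle_trans. apply HG1. apply Rmult_le_compat_l; auto. }
      assert (norm (Q (GP P Q n x)) <= M * (Kf M n * c * norm x)).
      { eapply Rle_trans. apply HQM. apply Rmult_le_compat_l; auto. }
      assert (norm (commutator Q P (Fop P Q n x)) <= c * ((2*M)^n * norm x)).
      { eapply Rle_trans. apply HK. apply Rmult_le_compat_l; auto. apply (F_bnd M n HM HPM HQM). }
      assert (0 <= Kf M n * c * norm x) by (apply Rmult_le_pos; auto).
      simpl Kf.
      replace (((2 * M + 2) * Kf M n + (2 * M) ^ n) * c * norm x) with
        (Kf M n * c * (M * norm x) + M * (Kf M n * c * norm x) + c * ((2*M)^n * norm x) + 2 * (Kf M n * c * norm x)) by ring.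
      lra.
    + rewrite I3. eapply Rle_trans. apply nplus. eapply Rle_trans. apply Rplus_le_compat_r. apply nminus.
      assert (norm (GQ P Q n (P x)) <= Kf M n * c * (M * norm x)).
      { eapply Rle_trans. apply HG2. apply Rmult_le_compat_l; auto. }
      assert (norm (Q (GQ P Q n x)) <= M * (Kf M n * c * norm x)).
      { eapply Rle_trans. apply HQM. apply Rmult_le_compat_l; auto. }
      assert (norm (Fop P Q n (commutator Q P x)) <= (2*M)^n * (c * norm x)).
      { eapply Rle_trans. apply (F_bnd M n HM HPM HQM). apply Rmult_le_compat_l; auto. }
      assert (0 <= Kf M n * c * norm x) by (apply Rmult_le_pos; auto).
      simpl Kf.
      replace (((2 * M + 2) * Kf M n + (2 * M) ^ n) * c * norm x) with
        (Kf M n * c * (M * norm x) + M * (Kf M n * c * norm x) + (2*M)^n * (c * norm x) + 2 * (Kf M n * c * norm x)) by ring.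
      lra.
Qed.

Lemma compare M c n : 0 <= M -> 0 <= c -> Bnd P M -> Bnd Q M -> Bnd (commutator Q P) c ->
  forall x, norm (binom_diff P Q n x) <= Kf M n * c * norm x + norm (binom_diff Q P n x).
Proof.
  intros HM Hc HPM HQM HK x.
  destruct (joint M c n HM Hc HPM HQM HK) as [HD _].
  rewrite (binom_E P Q n HP x), (binom_E Q P n HQ x).
  rewrite <- (agpm (Eop P Q n (fun y => y) x) (Fop P Q n x)).
  eapply Rle_trans. apply nplus. apply Rplus_le_compat. apply HD.
  rewrite F_sigma, sig_norm. lra.
Qed.

End P2.

Lemma root_mono n a b : (0 < n)%nat -> 0 <= a <= b ->
  exists ra rb, rbar_root n (Finite a) = Finite ra /\ rbar_root n (Finite b) = Finite rb /\ 0 <= ra <= rb.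
Proof.
  intros Hn Hab. simpl.
  assert (Hi : 0 <= / INR n) by (left; apply Rinv_0_lt_compat; apply lt_0_INR; lia).
  destruct (Rle_dec a 0); destruct (Rle_dec b 0).
  - exists 0, 0. repeat split; lra.
  - exists 0, (Rpower b (/ INR n)). repeat split; try lra. unfold Rpower. left; apply exp_pos.
  - lra.
  - exists (Rpower a (/ INR n)), (Rpower b (/ INR n)). repeat split.
    unfold Rpower. left; apply exp_pos. apply Rle_Rpower_l; auto. lra.
Qed.

Section P2b.
Context {X : CompleteNormedModule C_AbsRing}.

Theorem part2 (S T : R -> X -> X) : bounded_family S -> bounded_family T ->
  comm_vanish S T -> qn_to0 S T -> qn_to0 T S /\ asym_qn_equiv S T.
Proof.
  intros HS HT Hc Hq.
  destruct (bf_bnd2 T S HT HS) as [M [HM HTS]].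
  set (c := fun h => opnorm (commutator (S h) (T h))).
  assert (Hcb : forall h, 0 < h <= 1 -> Bnd (commutator (S h) (T h)) (c h) /\ 0 <= c h).
  { intros h Hh. destruct (HTS h Hh) as [H1 [H2 [H3 H4]]].
    assert (HL := lin_comm _ _ H3 H1). split. apply linear_bnd; auto.
    apply opnorm_ge0. destruct (linear_norm _ HL) as [K [HK HK']]. exists K.
    intros x Hx. eapply Rle_trans. apply HK'. rewrite <- (Rmult_1_r K) at 2. apply Rmult_le_compat_l; lra. }
  assert (Hts : qn_to0 T S).
  { intros eps. destruct (Hq eps) as [N HN]. exists (max N 1). intros n Hn.
    specialize (HN n ltac:(lia)).
    set (f := fun h => opnorm (binom_diff (T h) (S h) n)).
    set (g := fun h => opnorm (binom_diff (S h) (T h) n)).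
    assert (Hp : 0 <= (2*M)^n) by (apply pow_le; lra).
    assert (Hf : forall h, 0 < h <= 1 -> 0 <= f h <= (2*M)^n).
    { intros h Hh. destruct (HTS h Hh) as [H1 [H2 [H3 H4]]]. apply opnorm_bnd_le; auto.
      apply bnd_binom; auto. }
    assert (Hg : forall h, 0 < h <= 1 -> 0 <= g h <= (2*M)^n).
    { intros h Hh. destruct (HTS h Hh) as [H1 [H2 [H3 H4]]]. apply opnorm_bnd_le; auto.
      apply bnd_binom; auto. }
    destruct (ls_fin' f _ Hf) as [rf [Ef Hrf]].
    destruct (ls_fin' g _ Hg) as [rg [Eg Hrg]].
    assert (Hle : rf <= rg).
    { apply (ls_le f g _ _ rf rg Hf Hg); auto.
      intros ep Hep. set (K := Kf M n + 1).
      assert (HK : 0 < K) by (unfold K; assert (0 <= Kf M n) by (apply Kf_ge0; auto); lra).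
      destruct (flim_eps c Hc (ep / K)) as [d [Hd Hd']]. apply Rdiv_lt_0_compat; lra.
      exists d. split; auto. intros h Hh Hh1.
      destruct (HTS h (conj (proj1 Hh) Hh1)) as [H1 [H2 [H3 H4]]].
      destruct (Hcb h (conj (proj1 Hh) Hh1)) as [Hc1 Hc2].
      specialize (Hd' h Hh). rewrite Rabs_pos_eq in Hd' by auto.
      assert (HKf : 0 <= Kf M n) by (apply Kf_ge0; auto).
      assert (f h <= Kf M n * c h + g h).
      { apply opnorm_le. intros x Hx.
        eapply Rle_trans. apply (compare (T h) (S h) H1 H3 M (c h) n HM Hc2 H2 H4 Hc1 x).
        apply Rplus_le_compat.
        - rewrite <- (Rmult_1_r (Kf M n * c h)) at 2. apply Rmult_le_compat_l; auto.
          apply Rmult_le_pos; auto.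
        - apply opnorm_ub; auto. apply bnd_ex with ((2*M)^n); auto. apply bnd_binom; auto. }
      assert (Kf M n * c h <= K * c h) by (apply Rmult_le_compat_r; unfold K; lra).
      assert (K * c h < ep).
      { apply Rmult_lt_reg_l with (/K). apply Rinv_0_lt_compat; auto.
        rewrite <- Rmult_assoc, Rinv_l, Rmult_1_l by lra. unfold Rdiv in Hd'. lra. }
      lra. }
    change (Rbar_lt (Rbar_abs (rbar_root n (limsup0 f))) eps).
    change (Rbar_lt (Rbar_abs (rbar_root n (limsup0 g))) eps) in HN.
    rewrite Ef. rewrite Eg in HN.
    destruct (root_mono n rf rg ltac:(lia) (conj (proj1 Hrf) Hle)) as [ra [rb [Ea [Eb Hab]]]].
    rewrite Ea. rewrite Eb in HN. simpl in *. rewrite Rabs_pos_eq in * by lra. lra. }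
  split; auto. split; auto.
Qed.

End P2b.

Definition CCS := CompleteNormedModule.CompleteSpace _ C_CompleteNormedModule.
Definition CC_NM := prod_NormedModule C_AbsRing C_NormedModule C_NormedModule.

Definition CC_lim (F : ((C * C) -> Prop) -> Prop) : C * C :=
  (@lim CCS (filtermap fst F), @lim CCS (filtermap snd F)).

Lemma CC_ax1 : forall F : ((C * C) -> Prop) -> Prop,
  ProperFilter F -> @cauchy (prod_UniformSpace C_UniformSpace C_UniformSpace) F ->
  forall eps : posreal, F (@ball (prod_UniformSpace C_UniformSpace C_UniformSpace) (CC_lim F) eps).
Proof.
  intros F HF Hc eps.
  assert (H1 : @cauchy C_UniformSpace (filtermap fst F)).
  { intros e. destruct (Hc e) as [x Hx]. exists (fst x). unfold filtermap.
    eapply filter_imp; [|exact Hx]. intros y [Hy _]. exact Hy. }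
  assert (H2 : @cauchy C_UniformSpace (filtermap snd F)).
  { intros e. destruct (Hc e) as [x Hx]. exists (snd x). unfold filtermap.
    eapply filter_imp; [|exact Hx]. intros y [_ Hy]. exact Hy. }
  assert (G1 := @complete_cauchy CCS _ (filtermap_proper_filter _ _ fst F HF) H1 eps).
  assert (G2 := @complete_cauchy CCS _ (filtermap_proper_filter _ _ snd F HF) H2 eps).
  unfold filtermap in G1, G2.
  generalize (filter_and _ _ G1 G2). apply filter_imp. intros y [Hy1 Hy2]. split; assumption.
Qed.

Lemma CC_ax2 : forall F1 F2 : ((C * C) -> Prop) -> Prop,
  filter_le F1 F2 -> filter_le F2 F1 ->
  @close (prod_UniformSpace C_UniformSpace C_UniformSpace) (CC_lim F1) (CC_lim F2).
Proof.
  intros F1 F2 H12 H21 eps. split; simpl.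
  - apply (@close_lim CCS); intros P HP; unfold filtermap in *; auto.
  - apply (@close_lim CCS); intros P HP; unfold filtermap in *; auto.
Qed.

Definition CC_mixin := CompleteSpace.Mixin (prod_UniformSpace C_UniformSpace C_UniformSpace) CC_lim CC_ax1 CC_ax2.

Definition CC : CompleteNormedModule C_AbsRing :=
  CompleteNormedModule.Pack C_AbsRing (C * C)
    (CompleteNormedModule.Class C_AbsRing (C * C) (NormedModule.class C_AbsRing CC_NM) CC_mixin) (C * C).

Definition Tm (p : C * C) : C * C := (snd p, RtoC 0).
Definition Am (p : C * C) : C * C := (fst p, RtoC 0).
Definition Sz (p : C * C) : C * C := (RtoC 0, RtoC 0).

Lemma lin_Tm : @is_linear C_AbsRing (CompleteNormedModule.NormedModule C_AbsRing CC) (CompleteNormedModule.NormedModule C_AbsRing CC) Tm.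
Proof.
  exact (@is_linear_prod C_AbsRing CC_NM C_NormedModule C_NormedModule _ _ (@is_linear_snd C_AbsRing C_NormedModule C_NormedModule) (@is_linear_zero C_AbsRing CC_NM C_NormedModule)).
Qed.
Lemma lin_Am : @is_linear C_AbsRing (CompleteNormedModule.NormedModule C_AbsRing CC) (CompleteNormedModule.NormedModule C_AbsRing CC) Am.
Proof.
  exact (@is_linear_prod C_AbsRing CC_NM C_NormedModule C_NormedModule _ _ (@is_linear_fst C_AbsRing C_NormedModule C_NormedModule) (@is_linear_zero C_AbsRing CC_NM C_NormedModule)).
Qed.
Lemma lin_Sz : @is_linear C_AbsRing (CompleteNormedModule.NormedModule C_AbsRing CC) (CompleteNormedModule.NormedModule C_AbsRing CC) Sz.
Proof. exact (@is_linear_zero C_AbsRing CC_NM CC_NM). Qed.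

Lemma normCC (a b : C) : @norm C_AbsRing (CompleteNormedModule.NormedModule C_AbsRing CC) (a, b) = sqrt (Cmod a ^ 2 + Cmod b ^ 2).
Proof. reflexivity. Qed.

Local Notation GC := (CompleteNormedModule.AbelianGroup C_AbsRing CC).
Lemma z_eq : ((RtoC 0, RtoC 0) : CC) = @zero GC.
Proof. reflexivity. Qed.
Lemma minus_val (a b c d : C) : @minus GC ((a, b) : CC) ((c, d) : CC) = (Cminus a c, Cminus b d).
Proof. reflexivity. Qed.
Goal forall a : C, Cminus a (RtoC 0) = a. intros. ring. Qed.

Lemma bf_const (X : CompleteNormedModule C_AbsRing) (L : X -> X) : is_linear L -> bounded_family (fun _ : R => L).
Proof.
  intros HL. split. intros; auto.
  destruct (linear_norm L HL) as [M [HM HM']]. exists M. intros h Hh.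
  apply bnd_opnorm. exact HM'. lra.
Qed.

Lemma E_Sz_Tm k : forall x : CC, @Eop CC Sz Tm (S (S k)) (fun y => y) x = (RtoC 0, RtoC 0).
Proof.
  induction k; intros [a b].
  - exact (@mzz GC).
  - change (@Eop CC Sz Tm (S (S (S k))) (fun y => y) (a, b)) with
      (@minus GC (Sz (@Eop CC Sz Tm (S (S k)) (fun y => y) (a,b))) (@Eop CC Sz Tm (S (S k)) (fun y => y) (Tm (a,b)))).
    rewrite !IHk. exact (@mz0 GC).
Qed.

Lemma E_Tm_Sz m : forall x : CC, @Eop CC Tm Sz m (fun y => y) x = Nat.iter m Tm x.
Proof.
  assert (Hz : forall m, @Eop CC Tm Sz m (fun y => y) (RtoC 0, RtoC 0) = (RtoC 0, RtoC 0)).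
  { induction m0. reflexivity.
    change (@Eop CC Tm Sz (S m0) (fun y => y) (RtoC 0, RtoC 0)) with
      (@minus GC (Tm (@Eop CC Tm Sz m0 (fun y => y) (RtoC 0, RtoC 0))) (@Eop CC Tm Sz m0 (fun y => y) (RtoC 0, RtoC 0))).
    rewrite IHm0. exact (@mz0 GC). }
  induction m; intros x. reflexivity.
  change (@Eop CC Tm Sz (S m) (fun y => y) x) with
      (@minus GC (Tm (@Eop CC Tm Sz m (fun y => y) x)) (@Eop CC Tm Sz m (fun y => y) (RtoC 0, RtoC 0))).
  rewrite Hz, IHm. exact (@mzr GC _).
Qed.

Lemma iter_Tm k (x : CC) : Nat.iter (S (S k)) Tm x = (RtoC 0, RtoC 0).
Proof.
  induction k. reflexivity.
  change (Nat.iter (S (S (S k))) Tm x) with (Tm (Nat.iter (S (S k)) Tm x)). rewrite IHk. reflexivity.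
Qed.

Lemma opnorm_zero_fun (X : CompleteNormedModule C_AbsRing) (L : X -> X) :
  (forall x, L x = zero) -> opnorm L = 0.
Proof.
  intros H. assert (Hb : forall x : X, norm x <= 1 -> norm (L x) <= 0).
  { intros x _. rewrite H. right. apply (@norm_zero C_AbsRing (CompleteNormedModule.NormedModule C_AbsRing X)). }
  apply Rle_antisym. apply opnorm_le; auto. apply opnorm_ge0. exists 0; auto.
Qed.

Lemma qn_zero (X : CompleteNormedModule C_AbsRing) (P Q : R -> X -> X) :
  (forall h n x, (2 <= n)%nat -> binom_diff (P h) (Q h) n x = zero) -> qn_to0 P Q.
Proof.
  intros H eps. exists 2%nat. intros n Hn.
  set (f := fun h => opnorm (binom_diff (P h) (Q h) n)).
  assert (Hf : forall h, 0 < h <= 1 -> 0 <= f h <= 0).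
  { intros h Hh. unfold f. rewrite opnorm_zero_fun. lra. intros x. apply H; auto. }
  destruct (ls_fin' f 0 Hf) as [r [Er Hr]].
  change (Rbar_lt (Rbar_abs (rbar_root n (limsup0 f))) eps).
  rewrite Er. assert (r = 0) by lra. subst r. rewrite root_zero by lia. simpl.
  rewrite Rabs_R0. apply cond_pos.
Qed.

Theorem part3 : exists (X : CompleteNormedModule C_AbsRing) (A S T : R -> X -> X),
     bounded_family A /\ bounded_family S /\ bounded_family T /\
     asym_qn_equiv S T /\ comm_vanish S A /\ ~ comm_vanish T A.
Proof.
  exists CC, (fun _ => Am), (fun _ => Sz), (fun _ => Tm).
  split. apply bf_const. exact lin_Am.
  split. apply bf_const. exact lin_Sz.
  split. apply bf_const. exact lin_Tm.
  split. split.
  - apply qn_zero. intros h n x Hn. rewrite (binom_E _ _ n lin_Sz x).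
    destruct n as [|[|k]]; try lia. apply E_Sz_Tm.
  - apply qn_zero. intros h n x Hn. rewrite (binom_E _ _ n lin_Tm x).
    destruct n as [|[|k]]; try lia. rewrite E_Tm_Sz. apply iter_Tm.
  - split.
    + unfold comm_vanish. eapply filterlim_ext; [|apply filterlim_const].
      intros h. simpl. symmetry. apply opnorm_zero_fun. intros x. exact (@mz0 GC).
    + unfold comm_vanish. intros Hc.
      assert (HL : is_linear (@commutator CC Tm Am)) by (apply lin_comm; [exact lin_Tm | exact lin_Am]).
      set (x0 := ((RtoC 0, RtoC 1) : CC)).
      assert (Hx0 : norm x0 <= 1).
      { unfold x0. rewrite normCC, !Cmod_R, Rabs_R0, Rabs_R1. right.
        replace (0 ^ 2 + 1 ^ 2) with 1 by ring. apply sqrt_1. }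
      assert (Hv : norm (@commutator CC Tm Am x0) = 1).
      { assert (E : @commutator CC Tm Am x0 = ((RtoC (-1), RtoC 0) : CC)).
        { unfold commutator, x0, Tm, Am. simpl. etransitivity. apply minus_val. unfold Cminus, Cplus, Copp, RtoC. simpl. f_equal; f_equal; ring. }
        assert (Hm1 : Rabs (-1) = 1) by (rewrite Rabs_left; lra).
        rewrite E, normCC, !Cmod_R, Rabs_R0, Hm1.
        replace (1 ^ 2 + 0 ^ 2) with 1 by ring. apply sqrt_1. }
      assert (Hge : 1 <= opnorm (@commutator CC Tm Am)).
      { rewrite <- Hv. apply opnorm_ub; auto.
        destruct (linear_norm _ HL) as [M [HM HM']]. exists M. intros y Hy.
        eapply Rle_trans. apply HM'. rewrite <- (Rmult_1_r M) at 2. apply Rmult_le_compat_l; lra. }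
      destruct (flim_eps _ Hc (1/2)) as [d [Hd Hd']]. lra.
      specialize (Hd' (d/2) ltac:(lra)). simpl in Hd'.
      rewrite Rabs_pos_eq in Hd' by lra. lra.
Qed.

Theorem proposition9 :
  (* (i) *)
  (forall (X : CompleteNormedModule C_AbsRing) (S T : R -> X -> X),
     bounded_family S -> bounded_family T ->
     asym_equiv S T -> asym_qn_equiv S T) /\
  (* (ii) *)
  (forall (X : CompleteNormedModule C_AbsRing) (S T : R -> X -> X),
     bounded_family S -> bounded_family T ->
     comm_vanish S T -> qn_to0 S T ->
     qn_to0 T S /\ asym_qn_equiv S T) /\
  (* (iii) *)
  (exists (X : CompleteNormedModule C_AbsRing) (A S T : R -> X -> X),
     bounded_family A /\ bounded_family S /\ bounded_family T /\
     asym_qn_equiv S T /\ comm_vanish S A /\ ~ comm_vanish T A).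
Proof.
  split; [|split].
  - intros X S T HS HT He. apply part1; auto.
  - intros X S T HS HT Hc Hq. apply part2; auto.
  - apply part3.
Qed.
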